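(* Let $\Lambda_1, \Lambda_2$ be integral lattices. Any isomorphism of $\rho$-invariants $\varphi: (C(\Lambda_1),\rho_1) \to (C(\Lambda_2),\rho_2)$ induces an isomorphism of discriminant forms $\varphi: (\overline{\Lambda}_1, b_1) \to (\overline{\Lambda}_2, b_2)$ (namely the group isomorphism underlying the torsor isomorphism preserves the discriminant forms).
   Context: A lattice is a finitely generated free abelian group $\Lambda$ with a non-degenerate symmetric $\mathbb{Q}$-valued bilinear form $\langle\,,\rangle$, integral if valued in $\mathbb{Z}$; $|x| = \langle x,x\rangle$; $\sigma(\Lambda)$ is the signature. $\Lambda^* = \{x\in\Lambda\otimes\mathbb{Q}: \langle x,y\rangle\in\mathbb{Z}\ \forall y\in\Lambda\}$, $\overline{\Lambda} = \Lambda^*/\Lambda$, with discriminant form $b(\bar x,\bar y) \equiv \langle x,y\rangle \pmod 1$, $b:\overline{\Lambda}\times\overline{\Lambda}\to\mathbb{Q}/\mathbb{Z}$. $\mathrm{Char}(\Lambda) = \{\chi\in\Lambda^*: \langle\chi,y\rangle\equiv|y| \pmod 2\ \forall y\in\Lambda\}$, $C(\Lambda) = \mathrm{Char}(\Lambda)/2\Lambda$, a torsor over $2\Lambda^*/2\Lambda\cong\overline{\Lambda}$ via $[\chi]+\bar x = [\chi+2x]$. $\rho: C(\Lambda)\to\mathbb{Q}/2\mathbb{Z}$, $\rho([\chi]) \equiv (|\chi| - \sigma(\Lambda))/4 \pmod 2$. An isomorphism $(C(\Lambda_1),\rho_1)\to(C(\Lambda_2),\rho_2)$ is a bijection $\varphi: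 C(\Lambda_1)\to C(\Lambda_2)$ and a group isomorphism $\varphi: \overline{\Lambda}_1\to\overline{\Lambda}_2$ with $\rho_2\circ\varphi = \rho_1$ and $\varphi(c)-\varphi(c') = \varphi(c-c')$. An isomorphism of discriminant forms is a group isomorphism $\varphi$ with $b_2(\varphi\bar x,\varphi\bar y) = b_1(\bar x,\bar y)$. *)

(* Defs.v *)
From HB Require Import structures.
From mathcomp Require Import all_boot all_order all_algebra.
From Stdlib Require Import ClassicalEpsilon.
Set Implicit Arguments. Unset Strict Implicit. Unset Printing Implicit Defensive.
Import Order.TTheory GRing.Theory Num.Theory.
Local Open Scope ring_scope.

(* An integral lattice of rank n is Z^n with Gram matrix Q : 'M[int]_n,
   symmetric and non-degenerate.  Vectors of Λ ⊗ Q are row vectors 'rV[rat]_n. *)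
Definition lattice_gram (n : nat) (Q : 'M[int]_n) : Prop :=
  Q^T = Q /\ \det Q != 0.

Definition qvec (n : nat) := 'rV[rat]_n.

Definition gramQ (n : nat) (Q : 'M[int]_n) : 'M[rat]_n := map_mx intr Q.

Definition bform (n : nat) (Q : 'M[int]_n) (x y : qvec n) : rat :=
  (x *m gramQ Q *m y^T) 0 0.

Definition inLat (n : nat) (x : qvec n) : Prop := forall i, x 0 i \is a Num.int.

Definition inDual (n : nat) (Q : 'M[int]_n) (x : qvec n) : Prop :=
  forall y, inLat y -> bform Q x y \is a Num.int.

(* congruence of rationals modulo m (m = 1 : Q/Z, m = 2 : Q/2Z) *)
Definition eqmodQ (m a b : rat) : Prop := (a - b) / m \is a Num.int.

Definition isChar (n : nat) (Q : 'M[int]_n) (chi : qvec n) : Prop :=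
  inDual Q chi /\ forall y, inLat y -> eqmodQ 2 (bform Q chi y) (bform Q y y).

(* equality in Λ̄ = Λ^*/Λ of representatives *)
Definition eqDisc (n : nat) (x y : qvec n) : Prop := inLat (x - y).

(* equality in C(Λ) = Char(Λ)/2Λ of representatives *)
Definition eqChar (n : nat) (chi chi' : qvec n) : Prop :=
  inLat ((2%:R)^-1 *: (chi - chi')).

(* signature: p - q for a rational diagonalisation P Q P^T = diag d
   (well defined by Sylvester's law of inertia) *)
Definition is_signature (n : nat) (Q : 'M[int]_n) (s : int) : Prop :=
  exists (P : 'M[rat]_n) (d : 'rV[rat]_n),
    [/\ P \in unitmx, P *m gramQ Q *m P^T = diag_mx d &
        s = (#|[set i | 0 < d 0 i]|)%:Z - (#|[set i | d 0 i < 0]|)%:Z].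

Definition signature (n : nat) (Q : 'M[int]_n) : int :=
  epsilon (inhabits 0%R) (is_signature Q).

(* ρ([χ]) = (|χ| - σ)/4, a value in Q/2Z (compared via eqmodQ 2) *)
Definition rho (n : nat) (Q : 'M[int]_n) (chi : qvec n) : rat :=
  (bform Q chi chi - (signature Q)%:~R) / 4%:R.

(* An isomorphism (C(Λ1),ρ1) -> (C(Λ2),ρ2), given on representatives:
   fC : Char(Λ1) -> Char(Λ2) inducing a bijection C(Λ1) -> C(Λ2),
   g  : Λ1^* -> Λ2^* inducing a group isomorphism Λ̄1 -> Λ̄2,
   with ρ2 ∘ fC = ρ1 and fC(c) - fC(c') = g(c - c'), where the torsor
   difference [χ] - [χ'] is the class of (χ - χ')/2 in Λ̄. *)
Definition rho_iso (n1 n2 : nat) (Q1 : 'M[int]_n1) (Q2 : 'M[int]_n2)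
    (fC : qvec n1 -> qvec n2) (g : qvec n1 -> qvec n2) : Prop :=
  [/\ (forall chi, isChar Q1 chi -> isChar Q2 (fC chi)),
      (forall chi chi', isChar Q1 chi -> isChar Q1 chi' ->
          eqChar chi chi' -> eqChar (fC chi) (fC chi')),
      (forall chi chi', isChar Q1 chi -> isChar Q1 chi' ->
          eqChar (fC chi) (fC chi') -> eqChar chi chi') &
      (forall psi, isChar Q2 psi -> exists2 chi, isChar Q1 chi & eqChar (fC chi) psi)] /\
  [/\ (forall x, inDual Q1 x -> inDual Q2 (g x)),
      (forall x y, inDual Q1 x -> inDual Q1 y -> eqDisc x y -> eqDisc (g x) (g y)),
      (forall x y, inDual Q1 x -> inDual Q1 y -> eqDisc (g (x + y)) (g x + g y)),
      (forall x y, inDual Q1 x -> inDual Q1 y -> eqDisc (g x) (g y) -> eqDisc x y) &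
      (forall z, inDual Q2 z -> exists2 x, inDual Q1 x & eqDisc (g x) z)] /\
  [/\ (forall chi, isChar Q1 chi -> eqmodQ 2 (rho Q2 (fC chi)) (rho Q1 chi)) &
      (forall chi chi', isChar Q1 chi -> isChar Q1 chi' ->
          eqDisc ((2%:R)^-1 *: (fC chi - fC chi')) (g ((2%:R)^-1 *: (chi - chi'))))].

(* Main.v *)
Require Import Defs.
From mathcomp Require Import all_boot all_order all_algebra.
From mathcomp Require Import zify ring lra.
Import GRing.Theory Num.Theory.
Local Open Scope ring_scope.

Set Implicit Arguments. Unset Strict Implicit.
Lemma ecol n (w : 'rV[rat]_n) i : (w *m (delta_mx 0 i : 'rV[rat]_n)^T) 0 0 = w 0 i.
Proof. by rewrite trmx_delta -colE mxE. Qed.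
Lemma erow n (G : 'M[rat]_n) i : ((delta_mx 0 i : 'rV[rat]_n) *m G *m (delta_mx 0 i : 'rV[rat]_n)^T) 0 0 = G i i.
Proof. by rewrite -rowE ecol mxE. Qed.

Section B.
Variables (n : nat) (Q : 'M[int]_n).

Lemma bformDl x y z : bform Q (x + y) z = bform Q x z + bform Q y z.
Proof. by rewrite /bform !mulmxDl mxE. Qed.
Lemma bformDr x y z : bform Q z (x + y) = bform Q z x + bform Q z y.
Proof. by rewrite /bform linearD /= mulmxDr mxE. Qed.
Lemma bformZl a x z : bform Q (a *: x) z = a * bform Q x z.
Proof. by rewrite /bform -!scalemxAl mxE. Qed.
Lemma bformZr a x z : bform Q z (a *: x) = a * bform Q z x.
Proof. by rewrite /bform linearZ /= -scalemxAr mxE. Qed.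
Lemma bformNl x z : bform Q (- x) z = - bform Q x z.
Proof. by rewrite -scaleN1r bformZl mulN1r. Qed.
Lemma bformNr x z : bform Q z (- x) = - bform Q z x.
Proof. by rewrite -scaleN1r bformZr mulN1r. Qed.
Lemma bformBl x y z : bform Q (x - y) z = bform Q x z - bform Q y z.
Proof. by rewrite bformDl bformNl. Qed.
Lemma bformBr x y z : bform Q z (x - y) = bform Q z x - bform Q z y.
Proof. by rewrite bformDr bformNr. Qed.

Lemma bform_sym x y : Q^T = Q -> bform Q x y = bform Q y x.
Proof.
move=> hQ; rewrite /bform.
have tr (A : 'M[rat]_1) : A 0 0 = A^T 0 0 by rewrite mxE.
rewrite [LHS]tr !trmx_mul trmxK /gramQ map_trmx hQ mulmxA.
by [].
Qed.

Lemma inLatD (x y : qvec n) : inLat x -> inLat y -> inLat (x + y).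
Proof. by move=> hx hy i; rewrite mxE rpredD. Qed.
Lemma inLatN (x : qvec n) : inLat x -> inLat (- x).
Proof. by move=> hx i; rewrite mxE rpredN. Qed.
Lemma inLatB (x y : qvec n) : inLat x -> inLat y -> inLat (x - y).
Proof. by move=> hx hy; apply: inLatD => //; apply: inLatN. Qed.
Lemma inLat0 : inLat (0 : qvec n).
Proof. by move=> i; rewrite mxE. Qed.

Lemma bform_int x y : inLat x -> inLat y -> bform Q x y \is a Num.int.
Proof.
move=> hx hy; rewrite /bform mxE; apply: rpred_sum => j _.
rewrite mxE; apply: rpredM; last by rewrite mxE.
apply: rpred_sum => k _; apply: rpredM => //.
by rewrite /gramQ mxE intr_int.
Qed.

Lemma inLat_dual x : inLat x -> inDual Q x.
Proof. by move=> hx y hy; apply: bform_int. Qed.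
Lemma inDualD x y : inDual Q x -> inDual Q y -> inDual Q (x + y).
Proof. by move=> hx hy z hz; rewrite bformDl rpredD ?hx ?hy. Qed.
Lemma inDualB x y : inDual Q x -> inDual Q y -> inDual Q (x - y).
Proof. by move=> hx hy z hz; rewrite bformBl rpredB ?hx ?hy. Qed.

Lemma rho_shift p u : Q^T = Q ->
  rho Q (p + 2%:R *: u) - rho Q p = bform Q p u + bform Q u u.
Proof.
move=> hQ; rewrite /rho !(bformDl, bformDr, bformZl, bformZr).
rewrite (bform_sym u p hQ).
by field.
Qed.


Lemma even_prod (z : int) : exists m : int, z * (z - 1) = 2 * m.
Proof. exists ((z %/ 2)%Z * ((z %/ 2)%Z * 2 + 2 * (z %% 2)%Z - 1)); nia. Qed.

Lemma char_exists : Q^T = Q -> \det Q != 0 -> exists chi, isChar Q chi.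
Proof.
move=> hQ hdet.
pose w : qvec n := \row_i ((Q i i)%:~R : rat).
have hU : gramQ Q \in unitmx.
  by rewrite unitmxE /gramQ det_map_mx unitfE intr_eq0.
exists (w *m invmx (gramQ Q)).
have bchi y : bform Q (w *m invmx (gramQ Q)) y = (w *m y^T) 0 0.
  by rewrite /bform mulmxKV.
split.
  move=> y hy; rewrite bchi mxE; apply: rpred_sum => j _.
  by rewrite !mxE rpredM ?intr_int.
move=> y hy.
have P : inLat y /\ (bform Q (w *m invmx (gramQ Q)) y - bform Q y y) / 2 \is a Num.int.
  rewrite [y]row_sum_delta.
  apply: (big_ind (fun v => inLat v /\ (bform Q (w *m invmx (gramQ Q)) v - bform Q v v) / 2 \is a Num.int)).
  - split; first exact: inLat0.
    by rewrite /bform trmx0 !mulmx0 mxE subrr mul0r.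
  - move=> a b [ha ia] [hb ib]; split; first exact: inLatD.
    have -> : (bform Q (w *m invmx (gramQ Q)) (a + b) - bform Q (a + b) (a + b)) / 2 =
      (bform Q (w *m invmx (gramQ Q)) a - bform Q a a) / 2 +
      (bform Q (w *m invmx (gramQ Q)) b - bform Q b b) / 2 - bform Q a b.
      rewrite !(bformDl, bformDr) (bform_sym b a hQ); by field.
    by rewrite rpredB ?rpredD ?bform_int.
  - move=> i _; split.
      by move=> j; rewrite !mxE rpredM ?hy ?natr_int.
    rewrite bchi bformZl bformZr linearZ /= -scalemxAr mxE ecol.
    rewrite /bform erow !mxE.
    have /intrP [z ->] := hy i.
    have [m hm] := even_prod z.
    have -> : (z%:~R * (Q i i)%:~R - z%:~R * (z%:~R * (Q i i)%:~R)) / 2 =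
      - ((z * (z - 1))%:~R / 2 * (Q i i)%:~R) :> rat.
      by rewrite rmorphM rmorphB /=; field.
    rewrite hm rmorphM /=.
    have -> : (2%:~R * m%:~R / 2 : rat) = m%:~R by field.
    by rewrite rpredN rpredM ?intr_int.
by case: P.
Qed.


Lemma char_shift chi x : isChar Q chi -> inDual Q x -> isChar Q (chi + 2%:R *: x).
Proof.
move=> [hd hc] hx; split.
  by move=> y hy; rewrite bformDl bformZl rpredD ?rpredM ?natr_int ?hd ?hx.
move=> y hy; rewrite /eqmodQ bformDl bformZl.
have -> : (bform Q chi y + 2%:R * bform Q x y - bform Q y y) / 2 =
  (bform Q chi y - bform Q y y) / 2 + bform Q x y by field.
by rewrite rpredD ?hx //; apply: hc.
Qed.

Lemma q_comb p a b c : Q^T = Q -> isChar Q p -> inDual Q a -> inDual Q b ->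
  inLat (c - (a + b)) ->
  (rho Q (p + 2%:R *: c) - rho Q (p + 2%:R *: a) - rho Q (p + 2%:R *: b) + rho Q p
    - 2 * bform Q a b) / 2 \is a Num.int.
Proof.
move=> hQ [_ hp] ha hb hl.
have [l {}hl hc] : exists2 l, inLat l & c = a + b + l.
  by exists (c - (a + b)) => //; rewrite addrC subrK.
have -> : rho Q (p + 2%:R *: c) - rho Q (p + 2%:R *: a) - rho Q (p + 2%:R *: b) + rho Q p =
  (rho Q (p + 2%:R *: c) - rho Q p) - (rho Q (p + 2%:R *: a) - rho Q p)
  - (rho Q (p + 2%:R *: b) - rho Q p) by ring.
rewrite !rho_shift // hc !(bformDl, bformDr).
rewrite (bform_sym b a hQ) (bform_sym l a hQ) (bform_sym l b hQ).
have -> : (bform Q p a + bform Q p b + bform Q p l +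
   (bform Q a a + bform Q a b + bform Q a l + (bform Q a b + bform Q b b + bform Q b l) +
    (bform Q a l + bform Q b l + bform Q l l)) - (bform Q p a + bform Q a a) -
   (bform Q p b + bform Q b b) - 2 * bform Q a b) / 2 =
  (bform Q p l - bform Q l l) / 2 + bform Q l l + bform Q a l + bform Q b l by field.
by rewrite !rpredD ?ha ?hb ?bform_int ?hl //; apply: hp.
Qed.

End B.
Unset Implicit Arguments.

Theorem lemma2p3 (n1 n2 : nat) (Q1 : 'M[int]_n1) (Q2 : 'M[int]_n2)
    (fC g : qvec n1 -> qvec n2) :
  lattice_gram Q1 -> lattice_gram Q2 ->
  rho_iso Q1 Q2 fC g ->
  forall x y, inDual Q1 x -> inDual Q1 y ->
    eqmodQ 1 (bform Q2 (g x) (g y)) (bform Q1 x y).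
Proof.
move=> [hQ1 hd1] [hQ2 hd2] hiso x y hx hy.
move: hiso; rewrite /rho_iso => -[[fchar _ _ _] [[gdual _ gadd _ _] [frho fcomp]]].
have [chi hchi] := char_exists hQ1 hd1.
have hxy : inDual Q1 (x + y) by apply: inDualD.
have cx := char_shift hchi hx.
have cy := char_shift hchi hy.
have cxy := char_shift hchi hxy.
set p := fC chi.
have hp : isChar Q2 p by apply: fchar.
have shiftE t : (2%:R : rat)^-1 *: (chi + 2%:R *: t - chi) = t.
  by rewrite [chi + _]addrC addrK scalerA mulVf // scale1r.
have decomp t : isChar Q1 (chi + 2%:R *: t) ->
  exists2 a, fC (chi + 2%:R *: t) = p + 2%:R *: a & inLat (a - g t).
  move=> ht; exists ((2%:R : rat)^-1 *: (fC (chi + 2%:R *: t) - p)).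
    by rewrite scalerA mulfV // scale1r [p + _]addrC subrK.
  by have := fcomp _ _ ht hchi; rewrite shiftE.
have [a ea la] := decomp x cx.
have [b eb lb] := decomp y cy.
have [c ec lc] := decomp (x + y) cxy.
have gxd := gdual x hx. have gyd := gdual y hy.
have ad : inDual Q2 a.
  have -> : a = (a - g x) + g x by rewrite subrK.
  by apply: inDualD => //; apply: inLat_dual.
have bd : inDual Q2 b.
  have -> : b = (b - g y) + g y by rewrite subrK.
  by apply: inDualD => //; apply: inLat_dual.
have lab : inLat (c - (a + b)).
  have hg := gadd x y hx hy.
  move=> i; have := lc i; have := la i; have := lb i; have := hg i.
  rewrite !mxE => h1 h2 h3 h4.
  have -> : c 0 i - (a 0 i + b 0 i) =
    (c 0 i - g (x + y) 0 i) + (g (x + y) 0 i - (g x 0 i + g y 0 i))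
    - (a 0 i - g x 0 i) - (b 0 i - g y 0 i) by ring.
  apply: rpredB; last done. apply: rpredB; last done. by apply: rpredD.
have D1 := q_comb hQ2 hp ad bd lab.
have D2 : bform Q2 a b - bform Q2 (g x) (g y) \is a Num.int.
  have -> : bform Q2 a b - bform Q2 (g x) (g y) =
    bform Q2 (g x) (b - g y) + bform Q2 (g y) (a - g x) + bform Q2 (a - g x) (b - g y).
    rewrite !(bformBl, bformBr) (bform_sym (g y) a hQ2) (bform_sym (g y) (g x) hQ2).
    by ring.
  by rewrite !rpredD ?gxd ?gyd ?bform_int.
have E0 := frho chi hchi.
have Ex := frho _ cx. have Ey := frho _ cy. have Exy := frho _ cxy.
rewrite /eqmodQ in E0 Ex Ey Exy *.
rewrite ea in Ex. rewrite eb in Ey. rewrite ec in Exy.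
have R1 : bform Q1 x y = (rho Q1 (chi + 2%:R *: (x + y)) - rho Q1 (chi + 2%:R *: x)
   - rho Q1 (chi + 2%:R *: y) + rho Q1 chi) / 2.
  have -> : rho Q1 (chi + 2%:R *: (x + y)) - rho Q1 (chi + 2%:R *: x)
   - rho Q1 (chi + 2%:R *: y) + rho Q1 chi =
    (rho Q1 (chi + 2%:R *: (x + y)) - rho Q1 chi) - (rho Q1 (chi + 2%:R *: x) - rho Q1 chi)
   - (rho Q1 (chi + 2%:R *: y) - rho Q1 chi) by ring.
  rewrite !rho_shift // !(bformDl, bformDr) (bform_sym y x hQ1).
  by field.
rewrite R1.
set r2xy := rho Q2 (p + 2%:R *: c) in D1 Exy *.
set r2x := rho Q2 (p + 2%:R *: a) in D1 Ex *.
set r2y := rho Q2 (p + 2%:R *: b) in D1 Ey *.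
set r20 := rho Q2 p in D1 E0 *.
have -> : (bform Q2 (g x) (g y) -
  (rho Q1 (chi + 2%:R *: (x + y)) - rho Q1 (chi + 2%:R *: x) - rho Q1 (chi + 2%:R *: y) +
   rho Q1 chi) / 2) / 1 =
  - (bform Q2 a b - bform Q2 (g x) (g y)) - (r2xy - r2x - r2y + r20 - 2 * bform Q2 a b) / 2
  + (r2xy - rho Q1 (chi + 2%:R *: (x + y))) / 2 - (r2x - rho Q1 (chi + 2%:R *: x)) / 2
  - (r2y - rho Q1 (chi + 2%:R *: y)) / 2 + (r20 - rho Q1 chi) / 2 by field.
apply: rpredD => //; apply: rpredB => //; apply: rpredB => //; apply: rpredD => //.
apply: rpredB => //; by rewrite rpredN.
Qed.
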